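(* Let $\Gamma=\langle V,(w_u)_{u\in V},\alpha,\beta\rangle$ be a celebrity game with $\beta>1$ and let $W=\sum_{u\in V}w_u$. Then: (i) if $\Gamma$ is a star celebrity game, $PoS(\Gamma)=1$; (ii) if $\Gamma$ is not a star celebrity game and $\alpha\ge W$, then $PoS(\Gamma)=PoA(\Gamma)=1$; (iii) if $\Gamma$ is not a star celebrity game and $\alpha<W$, then $PoS(\Gamma)=PoA(\Gamma)=W/\alpha>1$.
   Context: A celebrity game $\Gamma=\langle V,(w_u)_{u\in V},\alpha,\beta\rangle$ consists of a set of players $V=\{1,\dots,n\}$, celebrity weights $w_u>0$, a link cost $\alpha>0$ and a critical distance $\beta$ with $1\le\beta\le n-1$. A strategy of player $u$ is a set $S_u\subseteq V\setminus\{u\}$; a strategy profile is $S=(S_1,\dots,S_n)$; its outcome graph $G[S]$ is the undirected graph on $V$ with edge set $\{\{u,v\}: u\in S_v\text{ or }v\in S_u\}$. With $d_G$ the graph distance (infinite between different connected components), the cost of player $u$ is $c_u(S)=\alpha|S_u|+\sum_{v:\,d_{G[S]}(u,v)>\beta}w_v$ and the social cost is $C(S)=\sum_{u\in V}c_u(S)$. $S$ is a Nash equilibrium (NE) if no player can strictly decrease its cost by changing only its own strategy; a graph is an NE graph of $\Gamma$ if it is $G[S]$ for some NE $S$. $\mathrm{opt}(\Gamma)=\min_S C(S)$, $PoA(\Gamma)=\max_{S\text{ NE}}C(S)/\mathrm{opt}(\Gamma)$ and $PoS(\Gamma)=\min_{S\text{ NE}}C(S)/\mathrm{opt}(\Gamma)$.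 $\Gamma$ is a star celebrity game if it has an NE graph that is connected. *)

(* Defs.v *)
From mathcomp Require Import all_boot all_order all_algebra.
Set Implicit Arguments. Unset Strict Implicit. Unset Printing Implicit Defensive.
Import Order.TTheory GRing.Theory Num.Theory.
Local Open Scope ring_scope.

Section Celebrity.
Variables (R : realFieldType) (n : nat).

Definition profile := {ffun 'I_n -> {set 'I_n}}.

Definition valid (S : profile) : bool := [forall u : 'I_n, u \notin S u].

Definition adj (S : profile) : rel 'I_n :=
  fun u v => (u \in S v) || (v \in S u).

Fixpoint ball (S : profile) (k : nat) (u : 'I_n) : {set 'I_n} :=
  match k with
  | 0 => [set u]
  | k'.+1 => ball S k' u :|: [set v | [exists x in ball S k' u, adj S x v]]
  end.

Variables (w : 'I_n -> R) (alpha : R) (beta : nat).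

Definition cost (S : profile) (u : 'I_n) : R :=
  alpha * #|S u|%:R + \sum_(v | v \notin ball S beta u) w v.

Definition social_cost (S : profile) : R := \sum_u cost S u.

Definition deviation (S S' : profile) (u : 'I_n) : Prop :=
  valid S' /\ forall v, v != u -> S' v = S v.

Definition is_NE (S : profile) : Prop :=
  valid S /\ forall u S', deviation S S' u -> cost S u <= cost S' u.

(* The empty profile, used only as a starting value for the minimum. *)
Definition empty_profile : profile := [ffun _ => set0].

Definition opt : R :=
  \big[Num.min/social_cost empty_profile]_(S : profile | valid S) social_cost S.

Definition PoA_is (r : R) : Prop :=
  (exists S, is_NE S /\ social_cost S / opt = r) /\
  (forall S, is_NE S -> social_cost S / opt <= r).

Definition PoS_is (r : R) : Prop :=
  (exists S, is_NE S /\ social_cost S / opt = r) /\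
  (forall S, is_NE S -> r <= social_cost S / opt).

Definition graph_connected (S : profile) : Prop :=
  forall u v : 'I_n, connect (adj S) u v.

Definition star_game : Prop := exists S, is_NE S /\ graph_connected S.

End Celebrity.

(* Main.v *)
Require Import Defs.
From mathcomp Require Import all_boot all_order all_algebra.
From mathcomp Require Import ring lra.
Set Implicit Arguments. Unset Strict Implicit. Unset Printing Implicit Defensive.
Import Order.TTheory GRing.Theory Num.Theory.


Section Balls.
Variable n : nat.
Implicit Types (S : profile n) (u v x : 'I_n).

Lemma adjC S u v : adj S u v = adj S v u.
Proof. by rewrite /adj orbC. Qed.

Lemma ballS S k u v :
  (v \in ball S k.+1 u) = (v \in ball S k u) || [exists x in ball S k u, adj S x v].
Proof. by rewrite /= inE inE. Qed.

Lemma ball_refl S k u : u \in ball S k u.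
Proof. elim: k => [|k IH]; first by rewrite /= inE. by rewrite ballS IH. Qed.

Lemma ball_step S k u v : v \in ball S k u -> v \in ball S k.+1 u.
Proof. by move=> h; rewrite ballS h. Qed.

Lemma ball_mono S k k' u v : (k <= k')%N -> v \in ball S k u -> v \in ball S k' u.
Proof.
move=> /subnK <-; elim: (k' - k)%N => [//|d IH] h; rewrite addSn; exact/ball_step/IH.
Qed.

Lemma ball_adj S k u x v : x \in ball S k u -> adj S x v -> v \in ball S k.+1 u.
Proof. by move=> hx ha; rewrite ballS; apply/orP; right; apply/existsP; exists x; rewrite hx. Qed.

Lemma ball0 S u v : (v \in ball S 0 u) = (v == u).
Proof. by rewrite /= inE. Qed.

Lemma ballSP S k u v : v \in ball S k.+1 u ->
  v \in ball S k u \/ exists2 x, x \in ball S k u & adj S x v.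
Proof.
rewrite ballS => /orP [h|/existsP [x /andP [hx ha]]]; [by left| by right; exists x].
Qed.

Lemma ball_trans S i j a b c :
  b \in ball S i a -> c \in ball S j b -> c \in ball S (i + j) a.
Proof.
move=> hb; elim: j c => [|j IH] c.
  by rewrite ball0 => /eqP ->; rewrite addn0.
move=> /ballSP [h|[x hx ha]]; rewrite addnS; first exact/ball_step/IH.
exact: (ball_adj (IH _ hx) ha).
Qed.

Lemma ball_sym S k u v : v \in ball S k u -> u \in ball S k v.
Proof.
elim: k u v => [|k IH] u v; first by rewrite !ball0 eq_sym.
move=> /ballSP [h|[x hx ha]]; first exact/ball_step/IH.
have h1 : x \in ball S 1 v by apply: (ball_adj (ball_refl S 0 v)); rewrite adjC.
exact: (ball_trans h1 (IH _ _ hx)).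
Qed.

Lemma ball_connect S k u v : v \in ball S k u -> connect (adj S) u v.
Proof.
elim: k v => [|k IH] v; first by rewrite ball0 => /eqP ->.
move=> /ballSP [h|[x hx ha]]; first exact: IH.
exact: (connect_trans (IH _ hx) (connect1 ha)).
Qed.

Lemma connect_ball S u v : connect (adj S) u v -> exists k, v \in ball S k u.
Proof.
move=> /connectP [p]; elim: p u v => [|y p IH] u v /=.
  by move=> _ ->; exists 0%N; exact: ball_refl.
move=> /andP [ha hp] hv; have [k hk] := IH y v hp hv.
exists (1 + k)%N; apply: ball_trans hk.
exact: (ball_adj (ball_refl S 0 u) ha).
Qed.

Lemma ball_sub S S' k u : (forall y, S' y \subset S y) ->
  ball S' k u \subset ball S k u.
Proof.
move=> hS; elim: k => [|k IH] //=; apply/subsetP => v /ballSP [h|[x hx ha]].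
  exact/ball_step/(subsetP IH).
apply: (ball_adj (subsetP IH _ hx)); move: ha; rewrite /adj.
by case/orP => h; apply/orP; [left|right]; apply: (subsetP (hS _)).
Qed.

Lemma ball_iso S S' b j a :
  (forall x v, x != b -> v != b -> adj S x v -> adj S' x v) ->
  b \notin ball S j a -> ball S j a \subset ball S' j a.
Proof.
move=> hadj; elim: j => [|j IH] hb; first by [].
apply/subsetP => v hv.
have hb' : b \notin ball S j a by apply: contra hb; exact: ball_step.
move: (hv) => /ballSP [h|[x hx ha]]; first exact/ball_step/(subsetP (IH hb')).
apply: (ball_adj (subsetP (IH hb') _ hx)); apply: hadj => //.
  by apply: contraNneq hb' => <-.
by apply: contraNneq hb => <-.
Qed.

Lemma ball_noadj S k u : (forall v, ~~ adj S u v) -> ball S k u = [set u].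
Proof.
move=> h; elim: k => [|k IH] //; apply/setP => v; rewrite ballS IH inE.
case: eqP => //= _; apply/existsP => [[x /andP [hx ha]]].
by move: hx; rewrite inE => /eqP hx; subst x; move: (h v); rewrite ha.
Qed.

Lemma ball_onebuyer S k u : (forall y, y != u -> S y = set0) ->
  ball S k u \subset u |: S u.
Proof.
move=> h; elim: k => [|k IH]; first by rewrite /= sub1set setU11.
apply/subsetP => v /ballSP [hv|[x hx ha]]; first exact: (subsetP IH).
rewrite !inE; move: ha; rewrite /adj.
case: (eqVneq v u) => [-> //|hvu]; rewrite (h v hvu) inE /=.
case: (eqVneq x u) => [-> -> //|hxu]; by rewrite (h x hxu) inE.
Qed.

End Balls.


Section Roots.
Variables (n : nat) (S : profile n).
Implicit Types (u v x : 'I_n).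

Definition croot v := [arg min_(x < v | connect (adj S) v x) val x].

Lemma adj_sym : symmetric (adj S).
Proof. by move=> x y; rewrite adjC. Qed.

Lemma croot_spec v : connect (adj S) v (croot v) /\
  forall x, connect (adj S) v x -> (val (croot v) <= val x)%N.
Proof.
rewrite /croot; case: arg_minnP => [|r hr hmin]; first exact: connect0.
by split.
Qed.

Lemma croot_eq u v : connect (adj S) u v -> croot u = croot v.
Proof.
move=> huv; have [hu mu] := croot_spec u; have [hv mv] := croot_spec v.
have hvu : connect (adj S) v u by rewrite (sym_connect_sym adj_sym).
apply: val_inj; apply/eqP; rewrite eqn_leq; apply/andP; split.
  by apply: mu; apply: connect_trans hv.
by apply: mv; apply: connect_trans hu.
Qed.

Lemma croot_croot v : croot (croot v) = croot v.
Proof. by apply/esym/croot_eq; case: (croot_spec v). Qed.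

Lemma ex_ball v : exists k, v \in ball S k (croot v).
Proof.
apply: connect_ball; rewrite (sym_connect_sym adj_sym); by case: (croot_spec v).
Qed.

Definition dist v := ex_minn (ex_ball v).

Lemma dist_spec v : v \in ball S (dist v) (croot v) /\
  forall k, v \in ball S k (croot v) -> (dist v <= k)%N.
Proof. rewrite /dist; case: ex_minnP => k hk hmin; by split. Qed.

Definition par v :=
  odflt v [pick x | (x \in ball S (dist v).-1 (croot v)) && adj S x v].

Lemma par_spec v : v != croot v ->
  adj S (par v) v /\ (dist (par v) < dist v)%N.
Proof.
move=> hv; have [hd hm] := dist_spec v.
have d0 : (0 < dist v)%N.
  rewrite lt0n; apply/negP => /eqP h; move: hd; rewrite h ball0 => h'.
  by rewrite h' in hv.
rewrite /par; case: pickP => [x /andP [hx ha]|hno] /=.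
  split => //.
  have hr : croot x = croot v.
    by rewrite -(croot_croot v); apply/esym/croot_eq/(ball_connect hx).
  have [_ hmx] := dist_spec x.
  have := hmx (dist v).-1; rewrite hr => /(_ hx).
  move=> h; apply: (leq_ltn_trans h); by rewrite ltn_predL.
exfalso; move: hd; rewrite -(prednK d0) => /ballSP [h|[x hx ha]].
  by have := hm _ h; rewrite leqNgt ltn_predL d0.
by have := hno x; rewrite hx ha.
Qed.

Definition arcs := [set a : 'I_n * 'I_n | a.2 \in S a.1].

Lemma arcs_card : (\sum_u #|S u|)%N = #|arcs|.
Proof.
have e : forall (T : finType) (A : {set T}), #|A| = (\sum_x (if x \in A then 1 else 0))%N.
  by move=> T A; rewrite -big_mkcond /= sum1_card.
under eq_bigr do rewrite e.
rewrite pair_big /= e; apply: eq_bigr => [[a b]] _; by rewrite inE.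
Qed.

Definition arc v : 'I_n * 'I_n :=
  if par v \in S v then (v, par v) else (par v, v).

Lemma nonroots_le : (#|[set v | v != croot v]| <= #|arcs|)%N.
Proof.
rewrite -(card_in_imset (f := arc)).
  apply: subset_leq_card; apply/subsetP => a /imsetP [v]; rewrite inE => hv ->.
  have [ha _] := par_spec hv; rewrite inE /arc.
  case: ifP => //= h; move: ha; by rewrite /adj h.
move=> v v'; rewrite !inE => hv hv'.
have [_ d] := par_spec hv; have [_ d'] := par_spec hv'.
rewrite /arc; case: ifP; case: ifP => _ _ [e1 e2] //; exfalso;
  [rewrite e2 in d; rewrite -e1 in d' | rewrite e1 in d; rewrite -e2 in d'];
  by move: (ltn_trans d d'); rewrite ltnn.
Qed.

End Roots.

Local Open Scope ring_scope.


Lemma sum_sub (R : numDomainType) (I : finType) (P Q : pred I) (F : I -> R) :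
  (forall i, 0 <= F i) -> (forall i, P i -> Q i) ->
  \sum_(i | P i) F i <= \sum_(i | Q i) F i.
Proof.
move=> h0 hPQ; rewrite [X in X <= _]big_mkcond [X in _ <= X]big_mkcond /=.
apply: ler_sum => i _; case: ifP => hP; first by rewrite hPQ.
by case: ifP.
Qed.

Section Lower.
Variables (R : realFieldType) (n : nat) (w : 'I_n -> R) (alpha : R) (beta : nat).
Hypotheses (hw : forall u, 0 <= w u) (ha : 0 <= alpha) (hn : (0 < n)%N).
Let W := \sum_(u : 'I_n) w u.

Lemma lower_bound S m : m <= alpha -> m <= W ->
  (n.-1)%:R * m <= social_cost w alpha beta S.
Proof.
move=> hma hmW.
set F := fun u => \sum_(v | v \notin ball S beta u) w v.
have -> : social_cost w alpha beta S = alpha * (\sum_u #|S u|)%:R + \sum_u F u.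
  by rewrite /social_cost /cost big_split /= natr_sum mulr_sumr.
set a := #|[set v | v != croot S v]|.
set c := #|[set v | v == croot S v]|.
have hac : (c + a)%N = n.
  rewrite -[RHS]card_ord -(cardsC [set v | v == croot S v]) /c /a; congr (_ + _)%N.
  by apply: eq_card => v; rewrite !inE.
have h1 : alpha * a%:R <= alpha * (\sum_u #|S u|)%:R.
  by apply: ler_wpM2l => //; rewrite ler_nat arcs_card nonroots_le.
have h2 : c%:R * W - W <= \sum_u F u.
  rewrite (bigID (fun u => u == croot S u)) /=.
  apply: ler_wpDr; first by apply: sumr_ge0 => u _; apply: sumr_ge0.
  apply: (@le_trans _ _ (\sum_(u | u == croot S u) (W - \sum_(x | croot S x == u) w x))).
    rewrite sumrB.
    have -> : \sum_(u | u == croot S u) W = c%:R * W.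
      rewrite (eq_bigl (fun u => u \in [set v | v == croot S v])); last by move=> u; rewrite inE.
      by rewrite sumr_const mulr_natl.
    apply: lerB => //; rewrite /W.
    rewrite [X in _ <= X](partition_big (croot S) (fun u => u == croot S u)) /=;
      last by move=> i _; rewrite croot_croot.
    exact: lexx.
  apply: ler_sum => u /eqP hu.
  rewrite /W (bigID (fun x => croot S x == u)) /= addrC addrK /F.
  apply: sum_sub => // x hx; apply: contra hx => hb.
  apply/eqP; rewrite hu; apply: croot_eq; rewrite (sym_connect_sym (adj_sym S)).
  exact: ball_connect hb.
have hc : (0 < c)%N.
  rewrite card_gt0; apply/set0Pn; exists (croot S (Ordinal hn)).
  by rewrite inE croot_croot.
have hn1 : (n.-1 = c.-1 + a)%N by rewrite -hac -subn1 addnC -addnBA ?subn1 // addnC.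
have hcW : c%:R * W - W = (c.-1)%:R * W.
  by rewrite -{1}(prednK hc) -addn1 natrD mulrDl mul1r addrK.
rewrite hn1 natrD mulrDl [X in _ <= X]addrC.
apply: lerD.
  apply: le_trans h2; rewrite hcW; apply: ler_wpM2l => //.
apply: le_trans h1; rewrite mulrC; apply: ler_wpM2r => //.
Qed.

End Lower.


Section Game.
Variables (R : realFieldType) (n : nat) (w : 'I_n -> R) (alpha : R) (beta : nat).
Hypotheses (hw : forall u, 0 < w u) (halpha : 0 < alpha) (hbeta : (1 < beta)%N) (hn : (0 < n)%N).
Let W := \sum_(u : 'I_n) w u.
Implicit Types (S : profile n) (u v x y : 'I_n) (T : {set 'I_n}).

Lemma hw0 u : 0 <= w u. Proof. exact: ltW. Qed.

Definition upd (S : profile n) u (T : {set 'I_n}) : profile n :=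
  [ffun y => if y == u then T else S y].

Lemma upd_dev S u T : valid S -> u \notin T -> deviation S (upd S u T) u.
Proof.
move=> /forallP hS hu; split.
  apply/forallP => y; rewrite ffunE; case: eqP => [->//|_]; exact: hS.
by move=> v hv; rewrite ffunE (negbTE hv).
Qed.

Lemma W_minus u : \sum_(v | v \notin [set u]) w v = W - w u.
Proof.
rewrite /W [in RHS](bigD1 u) //= addrC addrK; apply: eq_bigl => v; by rewrite inE.
Qed.

Lemma W_minus_mk u : \sum_x (if x == u then 0 else w x) = W - w u.
Proof.
rewrite -W_minus [in RHS]big_mkcond; apply: eq_bigr => x _; rewrite inE; by case: eqP.
Qed.

Lemma sum_notin_le S u : \sum_(v | v \notin ball S beta u) w v <= W - w u.
Proof.
rewrite -W_minus; apply: sum_sub => [v|v]; first exact: hw0.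
apply: contra; rewrite inE => /eqP ->; exact: ball_refl.
Qed.

Lemma cost_ge S u : alpha * #|S u|%:R <= cost w alpha beta S u.
Proof. rewrite /cost lerDl; apply: sumr_ge0 => v _; exact: hw0. Qed.

Lemma cost_ge0 S u : 0 <= cost w alpha beta S u.
Proof. apply: le_trans (cost_ge S u); apply: mulr_ge0 => //; exact: ltW. Qed.

Lemma NE_cost_le S u : is_NE w alpha beta S -> cost w alpha beta S u <= W - w u.
Proof.
move=> [hv hNE]; have h := hNE u _ (@upd_dev S u set0 hv (negbT (in_set0 u))).
apply: (le_trans h).
rewrite /cost ffunE eqxx cards0 mulr0 add0r; exact: sum_notin_le.
Qed.

Lemma NE_nonbuyer S v : is_NE w alpha beta S -> W - w v < alpha -> S v = set0.
Proof.
move=> hS hv; apply/eqP; rewrite -cards_eq0; apply/contraT => hne.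
have h1 : alpha <= alpha * #|S v|%:R.
  rewrite ler_pMr // ler1n lt0n; exact: hne.
have := le_trans h1 (le_trans (cost_ge S v) (NE_cost_le v hS)).
by rewrite leNgt hv.
Qed.

Lemma drop_lemma S u x v : is_NE w alpha beta S -> x \in S u ->
  (v \notin ball S beta u) || (v \in ball (upd S u (S u :\ x)) beta u) ->
  alpha <= W - w v.
Proof.
move=> hS hx hv; have [hval hNE] := hS.
set S' := upd S u (S u :\ x).
have hdev : deviation S S' u.
  apply: upd_dev => //; rewrite inE negb_and; apply/orP; right.
  by move: hval => /forallP.
have := hNE u S' hdev; rewrite /cost ffunE eqxx.
rewrite [#|S u|](cardsD1 x) hx natrD mulrDr mulr1 => h.
have hsub : ball S' beta u \subset ball S beta u.
  apply: ball_sub => y; rewrite ffunE; case: eqP => [->|_]; last exact: subxx.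
  exact: subsetDl.
set F' := \sum_(v | v \notin ball S' beta u) w v in h.
set F := \sum_(v | v \notin ball S beta u) w v in h.
suff : F' - F <= W - w v by lra.
rewrite /F' /F !(big_mkcond (fun y => y \notin _)) -sumrB -W_minus_mk.
apply: ler_sum => y _.
case: (eqVneq y v) => [->|hyv].
  case/orP: hv => hv.
    have h' : v \notin ball S' beta u by apply: contra hv; apply: (subsetP hsub).
    by rewrite hv h' subrr.
  by rewrite hv (subsetP hsub _ hv) /= subrr.
have := hw0 y; case: ifP => _; case: ifP => _; lra.
Qed.


Lemma ball_empty k u : ball (empty_profile n) k u = [set u].
Proof. by apply: ball_noadj => v; rewrite /adj !ffunE !inE. Qed.

Lemma cost_empty u : cost w alpha beta (empty_profile n) u = W - w u.
Proof. by rewrite /cost ffunE cards0 mulr0 add0r ball_empty W_minus. Qed.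

Lemma sc_empty : social_cost w alpha beta (empty_profile n) = (n.-1)%:R * W.
Proof.
rewrite /social_cost; under eq_bigr do rewrite cost_empty.
rewrite sumrB sumr_const card_ord -/W.
have -> : W *+ n = W *+ (n.-1).+1 by rewrite prednK.
by rewrite mulrSr addrK mulr_natl.
Qed.

Lemma valid_empty : valid (empty_profile n).
Proof. by apply/forallP => u; rewrite ffunE inE. Qed.

Lemma NE_empty : (forall x, w x <= alpha) -> is_NE w alpha beta (empty_profile n).
Proof.
move=> hwa; split; first exact: valid_empty.
move=> u S' [hv' hS']; rewrite cost_empty.
have h0 : forall y, y != u -> S' y = set0 by move=> y hy; rewrite hS' // ffunE.
have hb := ball_onebuyer beta h0.
set T := S' u.
have e1 : alpha * #|T|%:R = \sum_x (if x \in T then alpha else 0).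
  by rewrite -big_mkcond /= sumr_const mulr_natr.
have e2 : \sum_x (if x \notin u |: T then w x else 0) <=
    \sum_(v | v \notin ball S' beta u) w v.
  rewrite -big_mkcond; apply: sum_sub => [v|v]; first exact: hw0.
  by apply: contra; apply: (subsetP hb).
rewrite /cost -/T; apply: le_trans (lerD (lexx _) e2); rewrite e1 -big_split /=.
rewrite -W_minus_mk; apply: ler_sum => x _.
rewrite !inE; case: (eqVneq x u) => [_|hxu] /=.
  by case: ifP => _; rewrite ?add0r ?addr0 // ltW.
have := hwa x; have := hw0 x; case: ifP => _ /=; lra.
Qed.

Definition Pstar := exists c, forall v, v != c -> alpha <= W - w v.

Lemma notP_two : ~ Pstar -> exists v1 v2, [/\ v1 != v2, W - w v1 < alpha & W - w v2 < alpha].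
Proof.
move=> hP.
have h : forall c, exists v, v != c /\ W - w v < alpha.
  move=> c.
  case: (boolP [exists v, (v != c) && (W - w v < alpha)]) => [/existsP [v /andP [h1 h2]]|hn'].
    by exists v.
  exfalso; apply: hP; exists c => v hv; move: hn'; rewrite negb_exists => /forallP /(_ v).
  by rewrite hv /= -leNgt.
have [v1 [_ h1]] := h (Ordinal hn).
have [v2 [h12 h2]] := h v1.
by exists v1, v2; split => //; rewrite eq_sym.
Qed.

Lemma NE_all_empty S : ~ Pstar -> is_NE w alpha beta S -> forall u, S u = set0.
Proof.
move=> hP hS; have [v1 [v2 [h12 h1 h2]]] := notP_two hP.
have e1 := NE_nonbuyer hS h1; have e2 := NE_nonbuyer hS h2.
move=> u; apply/eqP; apply/contraT => /set0Pn [x hx].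
have inb : forall v, W - w v < alpha -> v \in ball S beta u.
  move=> v hv; apply/contraT => hnb.
  have := drop_lemma (v:=v) hS hx; rewrite hnb /= => /(_ isT).
  by rewrite leNgt hv.
have hb := ball_trans (ball_sym (inb _ h1)) (inb _ h2).
have ex : exists k, v2 \in ball S k v1 by exists (beta + beta)%N.
case: (ex_minnP ex) => k hk hmin.
have k0 : (0 < k)%N.
  rewrite lt0n; apply/negP => /eqP k0; move: hk; rewrite k0 ball0.
  by rewrite eq_sym (negbTE h12).
move: hk; rewrite -(prednK k0) => /ballSP [hk|[z hz ha]].
  by have := hmin _ hk; rewrite leqNgt ltn_predL k0.
have hnb : v2 \notin ball S k.-1 v1.
  by apply/negP => hk; have := hmin _ hk; rewrite leqNgt ltn_predL k0.
have hzv2 : v2 \in S z by move: ha; rewrite /adj e2 inE.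
set S' := upd S z (S z :\ v2).
have hiso : ball S k.-1 v1 \subset ball S' k.-1 v1.
  apply: (@ball_iso n S S' v2 k.-1 v1 _ hnb) => a b ha' hb'.
  rewrite /adj !ffunE.
  case: (eqVneq b z) => [e|_]; [subst b|]; case: (eqVneq a z) => [e|_]; try subst a;
    by rewrite ?inE ?ha' ?hb' /=.
have := drop_lemma (v:=v1) hS hzv2.
have -> : (v1 \notin ball S beta z) || (v1 \in ball S' beta z).
  case: (leqP k.-1 beta) => hkb.
    apply/orP; right; apply: (ball_mono hkb); apply: ball_sym.
    exact: (subsetP hiso).
  apply/orP; left; apply/negP => hv1.
  have hv2 : v2 \in ball S (beta + 1) v1.
    by apply: (ball_trans (ball_sym hv1)); apply: (ball_adj (ball_refl S 0 z)).
  by move: hnb; rewrite (ball_mono _ hv2) // addn1.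
by move=> /(_ isT); rewrite leNgt h1.
Qed.


Definition star c : profile n := [ffun y => if y == c then set0 else [set c]].

Lemma ball_star c u : ball (star c) beta u = setT.
Proof.
apply/setP => v; rewrite inE.
have hc : c \in ball (star c) 1 u.
  case: (eqVneq u c) => [->|huc]; first exact: ball_refl.
  apply: (ball_adj (ball_refl _ 0 u)); by rewrite /adj !ffunE (negbTE huc) inE eqxx orbT.
apply: (ball_mono (k := 2)) => //.
case: (eqVneq v c) => [->|hvc]; first exact: ball_step.
apply: (ball_adj hc); by rewrite /adj !ffunE (negbTE hvc) inE eqxx.
Qed.

Lemma cost_star c u : cost w alpha beta (star c) u = if u == c then 0 else alpha.
Proof.
rewrite /cost ball_star big_pred0; last by move=> v; rewrite inE.
rewrite ffunE; case: eqP => _; by rewrite ?cards0 ?cards1 ?mulr0 ?mulr1 addr0.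
Qed.

Lemma valid_star c : valid (star c).
Proof.
apply/forallP => u; rewrite ffunE; case: eqP => [_|/eqP h]; first by rewrite inE.
by rewrite inE.
Qed.

Lemma sc_star c : social_cost w alpha beta (star c) = (n.-1)%:R * alpha.
Proof.
rewrite /social_cost; under eq_bigr do rewrite cost_star.
rewrite (bigD1 c) //= eqxx add0r.
rewrite (eq_bigr (fun _ => alpha)); last by move=> i /negbTE ->.
rewrite (eq_bigl (fun u => u \in [set~ c])); last by move=> u; rewrite in_setC1.
by rewrite sumr_const cardsC1 card_ord mulr_natl.
Qed.

Lemma NE_star c : (forall v, v != c -> alpha <= W - w v) -> is_NE w alpha beta (star c).
Proof.
move=> hc; split; first exact: valid_star.
move=> u S' [hv' hS']; rewrite cost_star.
case: (eqVneq u c) => [_|huc]; first exact: cost_ge0.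
case: (boolP (S' u == set0)) => [/eqP he|hne].
  have hb : ball S' beta u = [set u].
    apply: ball_noadj => v; rewrite /adj he inE orbF.
    case: (eqVneq v u) => [->|hvu]; first by move: hv' => /forallP /(_ u).
    rewrite hS' // ffunE; case: eqP => _; by rewrite inE // eq_sym.
  by rewrite /cost hb he cards0 mulr0 add0r W_minus; apply: hc.
apply: le_trans (cost_ge S' u); rewrite ler_pMr // ler1n lt0n cards_eq0; exact: hne.
Qed.

Lemma conn_star c : graph_connected (star c).
Proof.
have h : forall u, connect (adj (star c)) u c.
  move=> u; case: (eqVneq u c) => [->|huc]; first exact: connect0.
  apply: connect1; by rewrite /adj !ffunE (negbTE huc) inE eqxx orbT.
move=> u v; apply: connect_trans (h u) _.
by rewrite (sym_connect_sym (adj_sym (star c))).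
Qed.

Lemma opt_value m : (forall S, valid S -> m <= social_cost w alpha beta S) ->
  (exists S, valid S /\ social_cost w alpha beta S = m) -> opt w alpha beta = m.
Proof.
move=> hlow [S [hS e]]; apply/le_anti/andP; split.
  by rewrite -e; apply: bigmin_le_cond.
apply: le_bigmin; first exact: hlow valid_empty.
exact: hlow.
Qed.

End Game.


Lemma w_le_Wminus (R : realFieldType) (n : nat) (w : 'I_n -> R) x v :
  (forall u, 0 < w u) -> x != v -> w x <= \sum_(u : 'I_n) w u - w v.
Proof.
move=> hw hxv; rewrite -W_minus_mk (bigD1 x) //= (negbTE hxv) lerDl.
by apply: sumr_ge0 => i _; case: ifP => _ //; apply: ltW.
Qed.

Theorem theorem1 (R : realFieldType) (n : nat) (w : 'I_n -> R) (alpha : R)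
  (beta : nat)
  (hw : forall u, 0 < w u) (halpha : 0 < alpha)
  (hb1 : (1 <= beta)%N) (hbn : (beta <= n.-1)%N) (hbeta : (1 < beta)%N) :
  let W := \sum_(u : 'I_n) w u in
  (star_game w alpha beta -> PoS_is w alpha beta 1) /\
  (~ star_game w alpha beta -> W <= alpha ->
     PoS_is w alpha beta 1 /\ PoA_is w alpha beta 1) /\
  (~ star_game w alpha beta -> alpha < W ->
     PoS_is w alpha beta (W / alpha) /\ PoA_is w alpha beta (W / alpha) /\
     1 < W / alpha).
Proof.
move=> W.
have hn1 : (1 < n.-1)%N by apply: leq_trans hbn.
have hn2 : (1 < n)%N by apply: (leq_trans hn1); exact: leq_pred.
have hn : (0 < n)%N by apply: ltnW.
set v0 := Ordinal hn; set v1 := Ordinal hn2.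
have hv01 : v0 != v1 by [].
have hw0 : forall u, 0 <= w u by move=> u; apply: ltW.
have hN : 0 < (n.-1)%:R :> R by rewrite ltr0n; apply: ltnW.
have hW : 0 < W.
  rewrite /W (bigD1 v0) //=; apply: ltr_pwDl => //; apply: sumr_ge0 => i _; exact: hw0.
have optv : forall m, m <= alpha -> m <= W ->
    (exists S, valid S /\ social_cost w alpha beta S = (n.-1)%:R * m) ->
    opt w alpha beta = (n.-1)%:R * m.
  move=> m h1 h2 hex; apply: (opt_value _ hex) => S _.
  exact: (lower_bound beta hw0 (ltW halpha) hn S h1 h2).
have PtoStar : Pstar w alpha -> star_game w alpha beta.
  move=> [c hc]; exists (star c); split; [exact: NE_star | exact: conn_star].
have notP_NE : ~ Pstar w alpha -> forall S, is_NE w alpha beta S -> S = empty_profile n.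
  move=> hP S hS; apply/ffunP => u; rewrite ffunE; exact: (NE_all_empty hw halpha hn hP hS u).
have notP_w : ~ Pstar w alpha -> forall x, w x < alpha.
  move=> hP x; have [a [b [hab ha hb]]] := notP_two hn hP.
  case: (eqVneq x a) => [->|hxa]; last by apply: le_lt_trans ha; exact: w_le_Wminus.
  apply: le_lt_trans hb; apply: w_le_Wminus => //.
have notstar : ~ star_game w alpha beta ->
    opt w alpha beta = (n.-1)%:R * Num.min alpha W ->
    PoS_is w alpha beta ((n.-1)%:R * W / ((n.-1)%:R * Num.min alpha W)) /\
    PoA_is w alpha beta ((n.-1)%:R * W / ((n.-1)%:R * Num.min alpha W)).
  move=> hs hopt.
  have hP : ~ Pstar w alpha by move=> /PtoStar.
  have hE : is_NE w alpha beta (empty_profile n).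
    by apply: (NE_empty beta hw halpha) => x; apply: ltW; apply: notP_w.
  have hall : forall S, is_NE w alpha beta S ->
      social_cost w alpha beta S / opt w alpha beta =
      (n.-1)%:R * W / ((n.-1)%:R * Num.min alpha W).
    move=> S hS; rewrite (notP_NE hP S hS) (sc_empty _ _ _ hn) -/W; congr (_ / _); exact: hopt.
  split; (split; [by exists (empty_profile n); split => //; apply: hall|]);
    by move=> S hS; rewrite hall.
have hP_or : Pstar w alpha \/ ~ Pstar w alpha.
  case: (boolP [exists c, [forall v, (v != c) ==> (alpha <= W - w v)]]) =>
    [/existsP [c /forallP hc]|hnP].
    by left; exists c => v hv; move: (hc v); rewrite hv.
  right => [[c hc]]; apply: (negP hnP); apply/existsP; exists c.
  by apply/forallP => v; apply/implyP; exact: hc.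
have nonstar_of : ~ Pstar w alpha -> ~ star_game w alpha beta.
  move=> hP [S [hSNE hconn]]; have e := notP_NE hP S hSNE.
  have := hconn v0 v1; rewrite e => /connect_ball [k].
  by rewrite ball_empty inE eq_sym (negbTE hv01).
have hmin1 : W <= alpha -> Num.min alpha W = W by move=> h; rewrite min_r.
have hmin2 : alpha < W -> Num.min alpha W = alpha by move=> h; rewrite min_l // ltW.
split.
  move=> hs; case: hP_or => [[c hc]|hP]; last by case: (nonstar_of hP).
  have haW : alpha < W.
    pose v := if c == v0 then v1 else v0.
    have hv : v != c.
      rewrite /v; case: (eqVneq c v0) => [->|h]; by rewrite eq_sym.
    apply: (le_lt_trans (hc v hv)); rewrite ltrBlDr ltrDl; exact: hw.
  have hopt : opt w alpha beta = (n.-1)%:R * alpha.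
    apply: optv => //; first exact: ltW.
    by exists (star c); split; [exact: valid_star | exact: sc_star].
  have hopt0 : 0 < opt w alpha beta by rewrite hopt; apply: mulr_gt0.
  split.
    exists (star c); split; first exact: (NE_star hw halpha hbeta hc).
    by rewrite (sc_star _ _ hbeta) hopt divff // gt_eqF // mulr_gt0.
  move=> S [hv _]; rewrite ler_pdivlMr // mul1r hopt.
  exact: (lower_bound beta hw0 (ltW halpha) hn S (lexx _) (ltW haW)).
split.
  move=> hs hWa.
  have hopt : opt w alpha beta = (n.-1)%:R * Num.min alpha W.
    rewrite hmin1 //; apply: optv => //.
    by exists (empty_profile n); split; [exact: valid_empty | exact: sc_empty].
  have hne : (n.-1)%:R * W != 0 by rewrite gt_eqF // mulr_gt0.
  have [h1 h2] := notstar hs hopt; rewrite hmin1 // (divff hne) in h1 h2.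
  by split.
move=> hs hWa.
have hopt : opt w alpha beta = (n.-1)%:R * Num.min alpha W.
  rewrite hmin2 //; apply: optv => //; first exact: ltW.
  by exists (star v0); split; [exact: valid_star | exact: sc_star].
have [h1 h2] := notstar hs hopt.
have e : (n.-1)%:R * W / ((n.-1)%:R * Num.min alpha W) = W / alpha.
  rewrite hmin2 //; field; apply/andP; split; apply: lt0r_neq0 => //.
rewrite e in h1 h2; split => //; split => //.
by rewrite ltr_pdivlMr // mul1r.
Qed.
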